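(* Let $\Gamma$ be a set of clauses with designated blocking variables, containing a clause $C\lor b$ where $b$ is a blocking variable and this clause is the unique occurrence of $b$ in $\Gamma$. Write $C=\ell_1\lor\dots\lor\ell_t$. Then the clauses $D_i=\lnot\ell_i\lor\lnot b$, $i=1,\dots,t$, can be introduced one by one by the cost-LPR rule, i.e. for each $i$, $D_i$ is cost-LPR w.r.t. $\Gamma\cup\{D_1,\dots,D_{i-1}\}$. (Thus $b$ becomes equivalent to $\lnot C$.)
   Context: Substitutions map variables to $0$, $1$ or literals; a partial assignment has $\sigma(x)\in\{0,1,x\}$ with domain $\sigma^{-1}(\{0,1\})$; $(\sigma\circ\tau)(x)=\sigma(\tau(x))$; total means all variables assigned. $C{\upharpoonright}_\sigma$: apply $\sigma$ to the literals and simplify; $\Gamma{\upharpoonright}_\sigma$ is the multiset of $C{\upharpoonright}_\sigma\ne1$, $C\in\Gamma$. $\lnot E$ is the partial assignment falsifying all literals of $E$. $\Gamma\vdash_1 E$ means unit propagation on $\Gamma{\upharpoonright}_{\lnot E}$ derives the empty clause; $\Gamma\vdash_1\Delta$ means this for all members of $\Delta$. $\mathrm{cost}(\alpha)=\sum_i\alpha(b_i)$ over blocking variables. A clause $E$ is cost-LPR w.r.t. $\Gamma$ if there is a partial assignment $\sigma$ with the same domain as $\lnot E$, differing from $\lnot E$ on exactly one variable, such that (1) $\Gamma{\upharpoonright}_{\lnot E}\vdash_1(\Gamma\cup\{E\}){\upharpoonright}_\sigma$ and (2) $\mathrm{cost}(\tau\circ\sigma)\le\mathrm{cost}(\tau)$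 for all total $\tau\supseteq\lnot E$. *)

(* Defs.v *)
From mathcomp Require Import all_boot.
Set Implicit Arguments. Unset Strict Implicit. Unset Printing Implicit Defensive.

(* Variables are natural numbers.  A literal is a pair (v, pol):
   (v, true) is the positive literal v, (v, false) is the negative literal ~v. *)
Definition var := nat.
Definition lit := (var * bool)%type.
Definition neg_lit (l : lit) : lit := (l.1, ~~ l.2).

(* A clause is a disjunction of literals (list; order/duplicates irrelevant).
   A CNF Gamma is a multiset (list) of clauses. *)
Definition clause := seq lit.
Definition cnf := seq clause.

Definition nontaut (c : clause) : Prop :=
  forall v : var, ~~ (((v, true) \in c) && ((v, false) \in c)).

(* Partial assignment: sigma v = Some b (v assigned b) or None (sigma(v) = v). *)
Definition pa := var -> option bool.
Definition tassign := var -> bool.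

Definition lit_val (a : pa) (l : lit) : option bool :=
  omap (fun b => b == l.2) (a l.1).

(* C|_sigma : None encodes the constant 1 (satisfied clause);
   otherwise the falsified literals are removed. *)
Definition restr_clause (a : pa) (c : clause) : option clause :=
  if has (fun l => lit_val a l == Some true) c then None
  else Some [seq l <- c | lit_val a l != Some false].

Definition restr_cnf (a : pa) (G : cnf) : cnf := pmap (restr_clause a) G.

(* ~E : the partial assignment falsifying all literals of E
   (meaningful for non-tautological E) *)
Definition neg_clause (E : clause) : pa :=
  fun v => if (v, true) \in E then Some false
           else if (v, false) \in E then Some true else None.

Definition assign_lit (l : lit) : pa :=
  fun v => if v == l.1 then Some l.2 else None.

Definition is_unit (c : clause) (l : lit) : bool := undup c == [:: l].

Inductive up_refutes : cnf -> Prop :=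
| upr_empty (G : cnf) : [::] \in G -> up_refutes G
| upr_unit (G : cnf) (c : clause) (l : lit) :
    c \in G -> is_unit c l -> up_refutes (restr_cnf (assign_lit l) G) ->
    up_refutes G.

Definition derives1 (G : cnf) (E : clause) : Prop :=
  up_refutes (restr_cnf (neg_clause E) G).

Definition comp_assign (t : tassign) (s : pa) : tassign :=
  fun v => match s v with Some b => b | None => t v end.

Definition cost (B : seq var) (a : tassign) : nat := \sum_(x <- B) (a x : nat).

Definition cost_LPR (B : seq var) (G : cnf) (E : clause) : Prop :=
  exists s : pa,
    (forall v, (s v == None) = (neg_clause E v == None)) /\
    (exists v, s v <> neg_clause E v /\
               forall w, s w <> neg_clause E w -> w = v) /\
    (forall E', E' \in restr_cnf s (E :: G) ->
                derives1 (restr_cnf (neg_clause E) G) E') /\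
    (forall t : tassign,
        (forall v b, neg_clause E v = Some b -> t v = b) ->
        cost B (comp_assign t s) <= cost B t).

(* Main.v *)
Require Import Defs.
From mathcomp Require Import all_boot.

Lemma restr_congr (a1 a2 : pa) (c : clause) :
  (forall l, l \in c -> a1 l.1 = a2 l.1) -> restr_clause a1 c = restr_clause a2 c.
Proof.
move=> H; rewrite /restr_clause /lit_val.
rewrite (@eq_in_has _ _ (fun l => omap (fun b => b == l.2) (a2 l.1) == Some true)); last first.
  by move=> l /H ->.
rewrite (@eq_in_filter _ _ (fun l => omap (fun b => b == l.2) (a2 l.1) != Some false)) //.
by move=> l /H ->.
Qed.

Lemma restr_sub (a : pa) c c' : restr_clause a c = Some c' -> {subset c' <= c}.
Proof.
rewrite /restr_clause; case: ifP => // _ [<-] x; rewrite mem_filter; by case/andP.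
Qed.

Lemma restr_self c : nontaut c -> restr_clause (neg_clause c) c = Some [::].
Proof.
move=> Hc.
have Hv : forall l, l \in c -> lit_val (neg_clause c) l = Some false.
  move=> [v p] Hl; rewrite /lit_val /neg_clause /=.
  case: p Hl => Hl.
    by rewrite Hl.
  case Ht: ((v, true) \in c).
    by move: (Hc v); rewrite Ht /= => /negP; rewrite Hl.
  rewrite Hl //.
rewrite /restr_clause.
have -> : has (fun l => lit_val (neg_clause c) l == Some true) c = false.
  apply/negbTE/hasPn => l /Hv -> //.
congr Some; apply/eqP; rewrite -(filter_pred0 c) ; apply/eqP/eq_in_filter => l /Hv -> //.
Qed.

Lemma has_true (a : pa) c l : l \in c -> lit_val a l = Some true -> restr_clause a c = None.
Proof.
move=> Hl Hv; rewrite /restr_clause; case: ifP => // /negbT/hasPn/(_ l Hl).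
by rewrite Hv.
Qed.

Section NE.
Variables (l : lit) (b : var).
Hypothesis Hlb : l.1 != b.
Let E := [:: neg_lit l; (b, false)].

Lemma nE_b : neg_clause E b = Some true.
Proof.
rewrite /neg_clause /E !inE /neg_lit !xpair_eqE (eq_sym b) (negbTE Hlb) /=.
by rewrite eqxx.
Qed.

Lemma nE_l : neg_clause E l.1 = Some l.2.
Proof.
rewrite /neg_clause /E !inE /neg_lit !xpair_eqE (negbTE Hlb) eqxx /=.
by case: l.2.
Qed.
End NE.

Theorem lemma6p6 (B : seq var) (C : clause) (b : var) (Gamma' : cnf) :
  uniq B -> b \in B ->
  (* all clauses of Gamma = {C \/ b} + Gamma' are non-tautological *)
  (forall c, c \in rcons C (b, true) :: Gamma' -> nontaut c) ->
  (* C \/ b is the unique occurrence of the variable b in Gamma *)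
  (forall l, l \in C -> l.1 != b) ->
  (forall c, c \in Gamma' -> forall l, l \in c -> l.1 != b) ->
  let Gamma := rcons C (b, true) :: Gamma' in
  let Ds := [seq [:: neg_lit l; (b, false)] | l <- C] in
  forall i, i < size C ->
    cost_LPR B (Gamma ++ take i Ds) (nth [::] Ds i).
Proof.
move=> _ _ Hnt HC HG' Gamma Ds i Hi.
rewrite /Ds (nth_map (0, true)) //.
set l := nth (0, true) C i.
have Hl : l \in C by apply: mem_nth.
have Hlb := HC l Hl.
set E := [:: neg_lit l; (b, false)].
pose s : pa := fun v => if v == b then Some false else neg_clause E v.
have Hsb : lit_val s (b, false) = Some true by rewrite /lit_val /s eqxx.
exists s; split.
  move=> v; rewrite /s; case: (v =P b) => [->|] //; by rewrite nE_b.
split.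
  exists b; split; first by rewrite /s eqxx nE_b.
  by move=> w; rewrite /s; case: (w =P b).
split.
  move=> E'; rewrite mem_pmap => /mapP [c Hc HcE].
  move: Hc; rewrite inE => /orP [/eqP Hc|].
    by move: HcE; rewrite Hc (@has_true _ _ (b, false)) // /E !inE eqxx orbT.
  rewrite mem_cat => /orP [|Hc]; last first.
    move: Hc => /mem_take /mapP [l' _ Hc'].
    by move: HcE; rewrite Hc' (@has_true _ _ (b, false)) // !inE eqxx orbT.
  rewrite inE => /orP [/eqP Hc|Hc].
    move: HcE; rewrite Hc (@has_true _ _ l) //.
      by rewrite mem_rcons inE Hl orbT.
    by rewrite /lit_val /s (negbTE Hlb) nE_l //= eqxx.
  have Hr : restr_clause s c = restr_clause (neg_clause E) c.
    apply: restr_congr => l' Hl'; rewrite /s (negbTE (HG' c Hc l' Hl')) //.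
  rewrite Hr in HcE.
  apply: upr_empty; rewrite mem_pmap; apply/mapP; exists E'.
    rewrite mem_pmap; apply/mapP; exists c => //.
    by rewrite mem_cat inE Hc orbT.
  rewrite restr_self //.
  move=> v; apply/negP => /andP [H1 H2].
  have Hct : nontaut c by apply: Hnt; rewrite inE Hc orbT.
  have := Hct v; rewrite (@restr_sub _ _ _ (esym HcE) _ H1) (@restr_sub _ _ _ (esym HcE) _ H2) //.
move=> t Ht; rewrite /cost; apply: leq_sum => x _.
rewrite /comp_assign /s; case: (x =P b) => // Hx.
case HE: (neg_clause E x) => [bb|] //; by rewrite (Ht _ _ HE).
Qed.
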